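(* Let $H$ be a finite group and $K\unlhd H$ with $H/K\cong S_3$. If $\chi\in\mathrm{Irr}(K)$ is $H$-invariant, then $\chi$ extends to $H$ and $|\mathrm{Irr}(H\mid\chi)|=3$.
   Context: $\mathrm{Irr}(H\mid\chi)$ denotes the set of irreducible constituents of the induced character $\chi^H$. *)

(* Defs.v *)
From mathcomp Require Import all_boot all_order all_algebra all_fingroup all_solvable all_field all_character.
Set Implicit Arguments. Unset Strict Implicit. Unset Printing Implicit Defensive.

(* Main.v *)
Require Import Defs.
From mathcomp Require Import all_boot all_order all_algebra all_fingroup all_solvable all_field all_character.
From mathcomp Require Import zify.
From Stdlib Require Import Lia.
Import GRing.Theory Num.Theory.
Local Open Scope ring_scope.

Lemma nirr6 (gT : finGroupType) (G : {group gT}) :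
  #|G| = 6%N -> ~~ abelian G -> Nirr G = 3%N.
Proof.
move=> oG nabG.
pose d (j : Iirr G) := Num.truncn ('chi_j 1%g).
have dE j : 'chi_j 1%g = (d j)%:R by rewrite truncnK ?Cnat_irr1.
have hs : (\sum_i (d i ^ 2) = 6)%N.
  apply/eqP; rewrite -(@eqr_nat algC) natr_sum -oG -irr_sum_square.
  by apply/eqP/eq_bigr => i _; rewrite dE natrX.
have dgt0 j : (0 < d j)%N by rewrite -(@ltr_nat algC) -dE irr1_gt0.
have [i nlin] : exists i : Iirr G, (d i != 1)%N.
  apply/existsP; apply: contraR nabG; rewrite negb_exists => /forallP h.
  apply/char_abelianP => j; rewrite qualifE /= irr_char /= dE.
  by move: (h j); rewrite negbK => /eqP ->.
have n0 : d 0 = 1%N.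
  by apply/eqP; rewrite -(@eqr_nat algC) -dE irr0 cfun11.
have i0 : i != 0.
  by apply: contra nlin => /eqP ->; rewrite n0.
move: hs; rewrite (bigD1 (0 : Iirr G)) //= (bigD1 i) /=; last by rewrite i0.
rewrite n0.
set rest := (\sum_(j | _) _)%N => hs.
have ni2 : d i = 2%N.
  have := dgt0 i; move: nlin hs; case: (d i) => [|[|[|[|k]]]] //=; rewrite ?expnS;
  lia.
have restE : rest = 1%N by move: hs; rewrite ni2 /=; lia.
have hc : (#|[pred j : Iirr G | (j != (0%R : Iirr G)) && (j != i)]| <= rest)%N.
  rewrite -sum1_card /rest; apply: leq_sum => j _.
  by have := dgt0 j; case: (d j).
have hc1 : (0 < #|[pred j : Iirr G | (j != (0%R : Iirr G)) && (j != i)]|)%N.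
  rewrite lt0n; apply/negP => /eqP /card0_eq h.
  by move: restE; rewrite /rest big_pred0.
rewrite -[Nirr G](card_ord (Nirr G)) -/(Iirr G) (cardD1 (0 : Iirr G)) (cardD1 i) !inE i0.
move: hc hc1; rewrite restE.
move=> hc hc1.
have -> : #|[predD1 [predD1 Iirr G & 0] & i]| = #|[pred j : Iirr G | (j != 0%R) && (j != i)]|.
  by apply: eq_card => j; rewrite !inE andbT andbC.
lia.
Qed.
Lemma cardS3 : #|[set: 'S_3]| = 6%N.
Proof. by rewrite cardsT card_Sn. Qed.

Lemma nabS3 : ~~ abelian [set: 'S_3].
Proof.
apply/negP => /centsP ab.
have := ab (tperm (0 : 'I_3) 1) (in_setT _) (tperm (1 : 'I_3) 2) (in_setT _).
move/(congr1 (fun s : 'S_3 => s (0 : 'I_3))).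
have e1 : tperm (0:'I_3) 1 0 = 1 := tpermL _ _.
have e2 : tperm (1:'I_3) 2 1 = 2 := tpermL _ _.
have e3 : tperm (1:'I_3) 2 0 = 0 by apply: tpermD.
rewrite !permM e1 e2 e3 e1.
by [].
Qed.

Lemma nat2 (a b : nat) : (a * b = 2 -> b != 1 -> a = 1)%N.
Proof. move=> h /eqP hb; nia. Qed.

Theorem lemma3p7 (gT : finGroupType) (H K : {group gT}) (i : Iirr K) :
  (K <| H)%g ->
  ((H / K)%g \isog [set: 'S_3])%g ->
  (H \subset 'I['chi[K]_i])%g ->
  (exists j : Iirr H, 'Res[K] 'chi[H]_j = 'chi[K]_i) /\
  #|[set j : Iirr H | j \in irr_constt ('Ind[H] 'chi[K]_i)]| = 3%N.
Proof.
move=> nsKH isoQ IHchi.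
have [sKH nKH] := andP nsKH.
have oQ : #|H / K|%g = 6%N by rewrite (card_isog isoQ) cardS3.
have nabQ : ~~ abelian (H / K)%g by rewrite (isog_abelian isoQ) nabS3.
have nirrQ : Nirr (H / K)%g = 3%N := @nirr6 _ (H / K)%G oQ nabQ.
have [Pb sylPb] := Sylow_exists 3 (H / K)%g.
have oPb : #|Pb| = 3%N.
  rewrite (card_Hall sylPb) oQ p_part. by vm_compute.
pose A := (coset K @*^-1 Pb)%G.
have sPbQ : Pb \subset (H / K)%g := pHall_sub sylPb.
have sKA : K \subset A := sub_cosetpre Pb.
have sAH : A \subset H by rewrite -(quotientGK nsKH) morphpreS.
have AbarE : (A / K)%g = Pb := cosetpreK Pb.
have iAK : #|A : K|%g = 3%N by rewrite -card_quotient ?(subset_trans sAH nKH) // AbarE.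
have iHK : #|H : K|%g = 6%N by rewrite -card_quotient.
have iHA : #|H : A|%g = 2%N.
  by have := Lagrange_index sAH sKA; rewrite iAK iHK; lia.
have nsAH : (A <| H)%g := index2_normal sAH iHA.
have nsKA : (K <| A)%g := normalS sKA sAH nsKH.
have sAN : A \subset 'N(K)%g := subset_trans sAH nKH.
have IAchi : A \subset 'I['chi_i]%g := subset_trans sAH IHchi.
have [e0 He0] := prime_invariant_irr_extendible nsKA iAK (isT : prime 3) IAchi.
pose X := [set j : Iirr A | 'Res[K] 'chi_j == 'chi_i].
have cardX : #|X| = 3%N.
  have [irrM injM imM _] := constt_Ind_ext nsKA He0.
  have abAK : abelian (A / K)%g.
    by rewrite cyclic_abelian // prime_cyclic //= AbarE oPb.
  have XE : forall j, (j \in X) = (j \in codom (@mul_mod_Iirr _ A K e0)).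
    move=> j; rewrite /X inE; apply/eqP/idP => [hj | ].
      by rewrite -imM constt_Ind_Res hj constt_irr inE.
    move=> /codomP [b ->].
    rewrite /mul_mod_Iirr /mul_Iirr cfIirrE ?irrM // rmorphM /= He0.
    rewrite cfRes_sub_ker; last by rewrite mod_IirrE // cfker_mod.
    rewrite mod_IirrE // cfMod1 lin_char1; last by apply/char_abelianP.
    by rewrite scale1r mul1r.
  rewrite (eq_card XE) card_codom // card_Iirr_abelian //= AbarE oPb.
  done.
have actH : is_action H (@conjg_Iirr _ A).
  split=> [y j k eq_jk | j y z Hy Hz].
    by apply/irr_inj/(can_inj (cfConjgK y)); rewrite -!conjg_IirrE eq_jk.
  by apply: irr_inj; rewrite !conjg_IirrE (cfConjgM _ nsAH).
pose ito := Action actH.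
have keep y j : y \in H -> j \in X -> ito j y \in X.
  move=> Hy; rewrite /X !inE /= conjg_IirrE => /eqP hj.
  by rewrite -(cfConjgRes _ nsAH nsKH Hy) hj inertiaJ ?(subsetP IHchi).
have [P2 sylP2] := Sylow_exists 2 H.
have sP2H : P2 \subset H := pHall_sub sylP2.
have actsX : [acts P2, on X | ito].
  apply/subsetP => y Py; have Hy := subsetP sP2H y Py.
  rewrite !inE Hy /=; apply/subsetP => j Xj; rewrite inE.
  exact: keep.
have := pgroup_fix_mod (pHall_pgroup sylP2) actsX.
rewrite cardX => hmod.
have : (0 < #|('Fix_(X | ito)(P2))%g|)%N.
  by rewrite lt0n; apply/negP => /eqP h; rewrite h in hmod.
case/card_gt0P => e /setIP [Xe /afixP fixe].
have P2Ie : P2 \subset 'I['chi_e]%g.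
  apply/subsetP => y Py; have Hy := subsetP sP2H y Py.
  rewrite inE (subsetP (normal_norm nsAH)) //= -conjg_IirrE.
  by have := fixe y Py; rewrite /= => ->.
have AIe : A \subset 'I['chi_e]%g := sub_inertia _.
have HIe : H \subset 'I['chi_e]%g.
  pose I := ('I_H['chi_e])%G.
  have sAI : A \subset I by rewrite subsetI sAH AIe.
  have sIH : I \subset H := subsetIl _ _.
  have := Lagrange_index sIH sAI; rewrite iHA.
  move=> h2; have [hIA | nIA] := eqVneq #|I : A|%g 1%N.
    move: hIA => /eqP; rewrite indexg_eq1 => sIA.
    have sP2A : P2 \subset A.
      by apply: subset_trans sIA; rewrite subsetI sP2H P2Ie.
    have /and3P [_ _ h2'] := sylP2.
    have hd : (#|H : A|%g %| #|H : P2|%g)%N.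
      by rewrite -(Lagrange_index sAH sP2A) dvdn_mulr.
    have h3 : ((2%N)^').-nat #|H : A|%g := pnat_dvd hd h2'.
    by rewrite iHA in h3.
  have := @nat2 _ _ h2 nIA; move/eqP; rewrite indexg_eq1 => sHI.
  by apply: subset_trans sHI (subsetIr _ _).
have [t Ht] := prime_invariant_irr_extendible nsAH iHA (isT : prime 2) HIe.
have XeE : 'Res[K] 'chi_e = 'chi_i by move: Xe; rewrite inE => /eqP.
have ext : 'Res[K] 'chi_t = 'chi_i by rewrite -(cfResRes _ sKA sAH) Ht XeE.
split; first by exists t.
have [_ injM imM _] := constt_Ind_ext nsKH ext.
have -> : #|[set j : Iirr H | j \in irr_constt ('Ind[H] 'chi[K]_i)]| =
          #|codom (@mul_mod_Iirr _ H K t)|.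
  by apply: eq_card => j; rewrite inE imM.
by rewrite card_codom // card_ord nirrQ.
Qed.
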